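(* Write $P_{a/b}(u,v,w)=\sum_{k\ge0}S_k(v,w)u^k$. Then: (1) for every integer $n\ge1$, for $P_{1/n}$ one has $S_1(v,w)=\sum_{k=1}^{n}k\,v^{k-1}w^{n-k}$; (2) for every integer $n\ge2$, for $P_{2/(2n-1)}$ one has $S_1(v,w)=2n\,v^{2n-1}+\sum_{k=1}^{n-1}4k\,v^{n+k-1}w^{n-k}$. Equivalently, in terms of the Markov polynomials, the coefficient polynomial $S_1(y^2,z^2)$ multiplies $x^{3-a}/(y^{b-1}z^{a+b-1})$ in the expansion of $M_{a/b}$ in powers of $x$.
   Context: Markov polynomials. Let $x,y,z$ be indeterminates. Consider the set consisting of all rationals $\rho\in[0,1]$, each written in lowest terms $\rho=a/b$ with integers $a\ge 0$, $b\ge 1$, together with the formal symbol $1/0$. Define Laurent polynomials $M_\rho(x,y,z)$ recursively by $M_{1/0}=y$, $M_{0/1}=x$, $M_{1/1}=\frac{x^2+y^2}{z}$, and: whenever $a/b$, $c/d$ are in this set with $|ad-bc|=1$ and $(a+2c)/(b+2d)\in[0,1]$, then $M_{\frac{a+2c}{b+2d}}=\big(M_{c/d}^2+M_{\frac{a+c}{b+d}}^2\big)/M_{a/b}$. This determines $M_\rho$ for every rational $\rho\in[0,1]$. Numerator. For coprime $1\le a\le b$, $P_{a/b}(u,v,w)$ denotes the homogeneous polynomial of degree $a+b-1$ such that $M_{a/b}(x,y,z)=P_{a/b}(x^2,y^2,z^2)/(x^{a-1}y^{b-1}z^{a+b-1})$; its existence is known. *)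

(* Defs.v *)
From HB Require Import structures.
From mathcomp Require Import all_boot all_order all_algebra.
From mathcomp Require Import fraction.
From mathcomp Require Import mpoly.
Set Implicit Arguments. Unset Strict Implicit. Unset Printing Implicit Defensive.
Import Order.TTheory GRing.Theory Num.Theory.
Local Open Scope ring_scope.

Notation Poly3 := {mpoly int[3]}.
(* Rational functions in x, y, z (Laurent polynomials live here). *)
Notation RF3 := {fraction Poly3}.
Notation "p %:F" := (@FracField.tofrac _ p) : ring_scope.

Definition i0 : 'I_3 := @Ordinal 3 0 isT.
Definition i1 : 'I_3 := @Ordinal 3 1 isT.
Definition i2 : 'I_3 := @Ordinal 3 2 isT.

Definition xF : RF3 := ('X_i0 : Poly3)%:F.
Definition yF : RF3 := ('X_i1 : Poly3)%:F.
Definition zF : RF3 := ('X_i2 : Poly3)%:F.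

(* The index set: the pair (a,b) of naturals stands for the rational a/b
   in lowest terms with 0 <= a/b <= 1 (b >= 1), or for the formal 1/0. *)
Definition in_index (a b : nat) : bool :=
  coprime a b && ((a <= b)%N || ((a == 1%N) && (b == 0%N))).

(* M : nat -> nat -> RF3, M a b standing for M_{a/b}, satisfies the
   defining recursion of the Markov polynomials. *)
Definition markov_family (M : nat -> nat -> RF3) : Prop :=
  [/\ M 1%N 0%N = yF,
      M 0%N 1%N = xF,
      M 1%N 1%N = (xF ^+ 2 + yF ^+ 2) / zF &
      forall a b c d : nat,
        in_index a b -> in_index c d ->
        `|(a * d)%:Z - (b * c)%:Z| = 1 ->
        (a + 2 * c <= b + 2 * d)%N ->
        M (a + 2 * c)%N (b + 2 * d)%N
          = (M c d ^+ 2 + M (a + c)%N (b + d)%N ^+ 2) / M a b].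

Definition markov_numerator (M : nat -> nat -> RF3) (a b : nat) (P : Poly3)
  : Prop :=
  P \is (a + b - 1)%N.-homog /\
  M a b = (P \mPo [tuple 'X_i0 ^+ 2; 'X_i1 ^+ 2; 'X_i2 ^+ 2] : Poly3)%:F
          / ((('X_i0 : Poly3) ^+ (a - 1) * 'X_i1 ^+ (b - 1)
              * 'X_i2 ^+ (a + b - 1))%:F).

(* Writing P(u,v,w) = sum_k S_k(v,w) u^k (u = variable 0), this is the
   term S_k(v,w) u^k of P. *)
Definition uterm (k : nat) (P : Poly3) : Poly3 :=
  \sum_(m <- msupp P | m i0 == k) P@_m *: 'X_[m].

(* Main.v *)
Require Import Defs.
From HB Require Import structures.
From mathcomp Require Import all_boot all_order all_algebra.
From mathcomp Require Import fraction.
From mathcomp Require Import mpoly.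
From mathcomp Require Import ring zify.
Import Order.TTheory GRing.Theory Num.Theory.
Local Open Scope ring_scope.

Definition sq : 3.-tuple Poly3 := [tuple 'X_i0 ^+ 2; 'X_i1 ^+ 2; 'X_i2 ^+ 2].
Definition t0 : 3.-tuple Poly3 := [tuple 0; 'X_i1; 'X_i2].

Lemma tnth_sq (i : 'I_3) : tnth sq i = 'X_i ^+ 2.
Proof.
case: i => [[|[|[|//]]] Hi].
- by rewrite (_ : Ordinal Hi = i0) //; apply/val_inj.
- by rewrite (_ : Ordinal Hi = i1) //; apply/val_inj.
- by rewrite (_ : Ordinal Hi = i2) //; apply/val_inj.
Qed.

Lemma Xsq (m : 'X_{1..3}) : 'X_[m] \mPo sq = 'X_[m *+ 2] :> Poly3.
Proof.
rewrite comp_mpolyX -mpolyXn mpolyXE_id -prodrXl.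
by apply: eq_bigr => i _; rewrite tnth_sq -!exprM mulnC.
Qed.

Lemma mulm2_eq (m m' : 'X_{1..3}) : (m' *+ 2 == m *+ 2)%MM = (m' == m).
Proof.
apply/eqP/eqP => [h|->//]; apply/mnmP => i.
have := congr1 (fun q : 'X_{1..3} => q i) h; rewrite /= !mulmnE; lia.
Qed.

Lemma coef_sq (p : Poly3) m : (p \mPo sq)@_(m *+ 2) = p@_m.
Proof.
rewrite comp_mpolyEX raddf_sum /= [X in _ = X@__]mpolyE raddf_sum /=.
apply: eq_bigr => m' _. rewrite !mcoeffZ Xsq.
rewrite !mcoeffX mulm2_eq //.
Qed.

Lemma sq_inj (p q : Poly3) : p \mPo sq = q \mPo sq -> p = q.
Proof. by move=> h; apply/mpolyP => m; rewrite -(coef_sq p) -(coef_sq q) h. Qed.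


Lemma coef_filter (r : Poly3) (P : pred 'X_{1..3}) k :
  \sum_(m' <- msupp r) (if P m' then r@_m' * (m' == k)%:R else 0)
  = if P k then r@_k else 0.
Proof.
case: ifP => hk.
- rewrite [X in _ = X@__]mpolyE raddf_sum /=; apply: eq_bigr => m' _.
  rewrite mcoeffZ mcoeffX.
  case: (eqVneq m' k) => [->|_]; first by rewrite hk.
  by rewrite mulr0; case: ifP.
- apply: big1 => m' _; case: ifP => // h'.
  case: (eqVneq m' k) => [e|]; last by rewrite mulr0.
  by rewrite e hk in h'.
Qed.

Lemma uterm_coef k p m : (uterm k p)@_m = if m i0 == k then p@_m else 0.
Proof.
rewrite /uterm raddf_sum /= big_mkcond /= -(coef_filter p (fun m' => m' i0 == k)).
by apply: eq_bigr => m' _; case: ifP => //; rewrite mcoeffZ mcoeffX.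
Qed.

Lemma tnth_t0 (i : 'I_3) : i != i0 -> tnth t0 i = 'X_i.
Proof.
case: i => [[|[|[|//]]] Hi] hi.
- by exfalso; move: hi; rewrite (_ : Ordinal Hi = i0) ?eqxx //; apply/val_inj.
- by rewrite (_ : Ordinal Hi = i1) //; apply/val_inj.
- by rewrite (_ : Ordinal Hi = i2) //; apply/val_inj.
Qed.

Lemma Xt0 (m : 'X_{1..3}) :
  'X_[m] \mPo t0 = if m i0 == 0%N then 'X_[m] else 0 :> Poly3.
Proof.
rewrite comp_mpolyX mpolyXE_id (bigD1 i0) //= [X in _ = if _ then X else _](bigD1 i0) //=.
case: ifP => h.
- rewrite (eqP h) !expr0 !mul1r; apply: eq_bigr => i hi; by rewrite tnth_t0.
- rewrite [tnth _ i0]/= expr0n h mul0r //.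
Qed.

Lemma coef_t0 (r : Poly3) k : (r \mPo t0)@_k = if k i0 == 0%N then r@_k else 0.
Proof.
rewrite comp_mpolyEX raddf_sum /= -(coef_filter r (fun m' => m' i0 == 0%N)).
apply: eq_bigr => m' _; rewrite mcoeffZ Xt0; case: ifP => _; last by rewrite mcoeff0 mulr0.
by rewrite mcoeffX.
Qed.

Lemma coefX0M (q : Poly3) m :
  ('X_i0 * q)@_m = if (1 <= m i0)%N then q@_(m - U_(i0))%MM else 0.
Proof.
case: ifP => h.
- have e : m = (U_(i0) + (m - U_(i0)))%MM.
    by rewrite addmC submK //; apply/mnm_lepP => i; rewrite mnm1E; case: eqP => [<-|].
  by rewrite {1}e mulrC mcoeffMX.
- apply: memN_msupp_eq0; rewrite mulrC (perm_mem (msuppMX _ _)).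
  apply/mapP => -[m' _ e]; move: h; rewrite e mnmDE mnm1E eqxx; lia.
Qed.

Lemma uterm1E (p : Poly3) : uterm 1 p = 'X_i0 * (p^`M(i0) \mPo t0).
Proof.
apply/mpolyP => m; rewrite uterm_coef coefX0M coef_t0 mnmBE mnm1E eqxx.
case: (eqVneq (m i0) 1%N) => h.
- rewrite h /= mcoeff_mderiv mnmBE mnm1E eqxx h /=.
  congr (mcoeff _ p); apply/mnmP => i; rewrite mnmDE mnmBE mnm1E.
  by case: eqP => [<-|]; rewrite ?h //; lia.
- by case: ifP => // h1; case: ifP => // h2; exfalso; move: h h1 h2; lia.
Qed.

Notation u := ('X_i0 : Poly3).
Notation v := ('X_i1 : Poly3).
Notation w := ('X_i2 : Poly3).

Fixpoint PP (n : nat) : Poly3 * Poly3 :=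
  if n is n'.+1 then let: (a, b) := PP n' in (b, (u + v + w) * b - v * w * a)
  else (1, u + v).
Definition Pn n := (PP n).1.

Lemma Pn0 : Pn 0 = 1. Proof. by []. Qed.
Lemma Pn1 : Pn 1 = u + v. Proof. by []. Qed.
Lemma PnSS n : Pn n.+2 = (u + v + w) * Pn n.+1 - v * w * Pn n.
Proof. by rewrite /Pn /=; case: (PP n). Qed.

Lemma cass_gen (R : comRingType) (s q a b c : R) :
  c = s * b - q * a -> (s * c - q * b) * b - c ^+ 2 = q * (c * a - b ^+ 2).
Proof. by move=> ->; ring. Qed.

Lemma cassini n : Pn n.+2 * Pn n - Pn n.+1 ^+ 2 = u * w * (v * w) ^+ n.
Proof.
elim: n => [|n IH].
- rewrite PnSS Pn1 Pn0 expr0; ring.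
- rewrite (PnSS n.+1) (@cass_gen _ _ _ _ _ _ (PnSS n)) IH exprS; ring.
Qed.

Lemma t0u : u \mPo t0 = 0. Proof. by rewrite comp_mpolyXU. Qed.
Lemma t0v : v \mPo t0 = v. Proof. by rewrite comp_mpolyXU. Qed.
Lemma t0w : w \mPo t0 = w. Proof. by rewrite comp_mpolyXU. Qed.
Definition An n := Pn n \mPo t0.
Lemma An_eq n : An n = v ^+ n.
Proof.
suff : An n = v ^+ n /\ An n.+1 = v ^+ n.+1 by case.
elim: n => [|n [IH1 IH2]].
- by rewrite /An Pn0 Pn1 rmorph1 rmorphD /= t0u t0v add0r expr0 expr1.
- split => //; rewrite /An PnSS rmorphB !rmorphM !rmorphD /= t0u t0v t0w.
  rewrite -/(An n.+1) -/(An n) IH1 IH2.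
  move: (v) (w) => a b; rewrite !exprS; ring.
Qed.

Lemma du : u^`M(i0) = 1.
Proof.
have e : (U_(i0) - U_(i0) = 0 :> 'X_{1..3})%MM.
  by apply/mnmP => i; rewrite mnmBE subnn mnm0E.
by rewrite mderivX mnm1E eqxx scale1r e mpolyX0.
Qed.
Lemma dv : v^`M(i0) = 0.
Proof. rewrite mderivX mnm1E.
have -> : (i1 == i0) = false by [].
by rewrite scale0r. Qed.
Lemma dw : w^`M(i0) = 0.
Proof. rewrite mderivX mnm1E.
have -> : (i2 == i0) = false by [].
by rewrite scale0r. Qed.
Lemma d1 : (1 : Poly3)^`M(i0) = 0.
Proof. by rewrite -mpolyC1 mderivC. Qed.

Definition Dn n := (Pn n)^`M(i0) \mPo t0.
Lemma DnSS n : Dn n.+2 = An n.+1 + (v + w) * Dn n.+1 - v * w * Dn n.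
Proof.
rewrite /Dn PnSS mderivB !mderivM !mderivD du dv dw !rmorphB !rmorphD !rmorphM /=.
rewrite !rmorphD /= t0u t0v t0w rmorph0 rmorph1 -/(An n.+1) mul0r mulr0 rmorph0.
move: (An _) (v) (w) (_ \mPo t0) (_ \mPo t0) (_ \mPo t0) => a b c d e f; ring.
Qed.
Lemma Dn0 : Dn 0 = 0.
Proof. by rewrite /Dn Pn0 d1 rmorph0. Qed.
Lemma Dn1 : Dn 1 = 1.
Proof. by rewrite /Dn Pn1 mderivD du dv addr0 rmorph1. Qed.

Definition Bsum n : Poly3 :=
  \sum_(1 <= k < n.+1) (k%:R : int) *: (v ^+ (k - 1) * w ^+ (n - k)).

Lemma Brec n : Bsum n.+1 = w * Bsum n + v ^+ n *+ n.+1.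
Proof.
rewrite /Bsum big_nat_recr //= subnn expr0 mulr1 subn1 /= scaler_nat; congr (_ + _).
rewrite mulr_sumr; apply: eq_big_nat => k /andP [h1 h2].
by rewrite subSn -1?ltnS // exprS -scalerAr mulrCA.
Qed.

Lemma Dn_eq n : Dn n = Bsum n.
Proof.
suff : Dn n = Bsum n /\ Dn n.+1 = Bsum n.+1 by case.
elim: n => [|n [IH1 IH2]].
- rewrite Dn0 Dn1 /Bsum big_nat1 big_geq // expr0 mulr1 scale1r; done.
- split => //; rewrite DnSS IH1 IH2 An_eq (Brec n.+1) Brec exprS.
  move: (Bsum n) (v) (w) => a b c; ring.
Qed.

Lemma X_neq0 (m : 'X_{1..3}) : 'X_[m] != 0 :> Poly3.
Proof. by apply/eqP => h; have := @msuppX 3 int m; rewrite h msupp0. Qed.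

Lemma Pn_neq0 n : Pn n != 0.
Proof.
apply/eqP => h; have := An_eq n; rewrite /An h rmorph0 => /esym/eqP.
by rewrite expf_eq0 (negbTE (X_neq0 _)) andbF.
Qed.

Definition Q n := Pn n \mPo sq.
Lemma Q_neq0 n : Q n != 0.
Proof.
apply/eqP => h; move: (Pn_neq0 n).
by rewrite (@sq_inj (Pn n) 0) ?eqxx // rmorph0. Qed.

Lemma squ : u \mPo sq = u ^+ 2. Proof. by rewrite comp_mpolyXU. Qed.
Lemma sqv : v \mPo sq = v ^+ 2. Proof. by rewrite comp_mpolyXU. Qed.
Lemma sqw : w \mPo sq = w ^+ 2. Proof. by rewrite comp_mpolyXU. Qed.

Lemma cassQ n : Q n.+2 * Q n - Q n.+1 ^+ 2 = u ^+ 2 * w ^+ 2 * (v ^+ n * w ^+ n) ^+ 2.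
Proof.
have := congr1 (comp_mpoly sq) (cassini n).
rewrite rmorphB !rmorphM /= !rmorphXn /= !rmorphM /= squ sqv sqw -/(Q _) -/(Q _) -/(Q _) => ->.
congr (_ * _); rewrite !exprMn -!exprM.
by rewrite !exprM !expr2.
Qed.

Lemma step_gen (K : fieldType) (x y z Y Z a b c : K) :
  y != 0 -> z != 0 -> Y != 0 -> Z != 0 -> a != 0 ->
  c * a - b ^+ 2 = x ^+ 2 * z ^+ 2 * (Y * Z) ^+ 2 ->
  (x ^+ 2 + (b * y / ((y * Y) * (z * Z))) ^+ 2) / (a * y / (Y * Z))
    = c * y / ((y * (y * Y)) * (z * (z * Z))).
Proof.
move=> hy hz hY hZ ha h.
have -> : c = (b ^+ 2 + x ^+ 2 * z ^+ 2 * (Y * Z) ^+ 2) / a.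
  by rewrite -h addrC subrK mulfK.
by field; rewrite ?hy ?hz ?hY ?hZ ?ha.
Qed.

Lemma base1_gen (K : fieldType) (x y z : K) :
  y != 0 -> z != 0 -> (x ^+ 2 + y ^+ 2) / z = (x ^+ 2 + y ^+ 2) * y / (y ^+ 1 * z ^+ 1).
Proof. by move=> hy hz; field; rewrite ?hy ?hz. Qed.

Lemma num1_gen (K : fieldType) (y Y Z p q : K) :
  y != 0 -> Y != 0 -> Z != 0 ->
  p / (Y * Z) = q * y / ((y * Y) * Z) -> p = q.
Proof.
move=> hy hY hZ h.
have : p / (Y * Z) * (Y * Z) = q * y / ((y * Y) * Z) * (Y * Z) by rewrite h.
have e1 : p / (Y * Z) * (Y * Z) = p by field; rewrite ?hY ?hZ.
have e2 : q * y / ((y * Y) * Z) * (Y * Z) = q by field; rewrite ?hy ?hY ?hZ.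
by rewrite e1 e2.
Qed.

Lemma sum4 d : \sum_(1 <= k < d.+1) ((4 * k)%N%:R : int) *:
    (v ^+ (d.+1 + k - 1) * w ^+ (d.+1 - k)) = (v ^+ d.+1 * w * Bsum d) *+ 4.
Proof.
rewrite /Bsum mulr_sumr -sumrMnl; apply: eq_big_nat => k /andP [h1 h2].
rewrite !scaler_nat.
have -> : (d.+1 + k - 1 = d.+1 + (k - 1))%N by lia.
have -> : (d.+1 - k = (d - k).+1)%N by lia.
rewrite exprD (exprS w) mulrnA.
move: (v ^+ d.+1) (v ^+ (k - 1)) (w ^+ (d - k)) (w) => a b c e.
ring.
Qed.

Lemma part2_gen (K : fieldType) (x y z Y Z a b p : K) :
  x != 0 -> y != 0 -> z != 0 -> Y != 0 -> Z != 0 ->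
  ((a * y / (Y * Z)) ^+ 2 + (b * y / ((y * Y) * (z * Z))) ^+ 2) / x
    = p / (x * (Y * Y) * (z * (z * (Z * Z)))) ->
  p = y ^+ 2 * z ^+ 2 * a ^+ 2 + b ^+ 2.
Proof.
move=> hx hy hz hY hZ h.
have e1 : p = p / (x * (Y * Y) * (z * (z * (Z * Z)))) * (x * (Y * Y) * (z * (z * (Z * Z)))).
  by field; rewrite ?hx ?hY ?hz ?hZ.
rewrite e1 -h; field; by rewrite ?hx ?hy ?hz ?hY ?hZ.
Qed.


Definition Fn n : RF3 := (Q n)%:F * yF / (yF ^+ n * zF ^+ n).

Lemma xF_neq0 : xF != 0. Proof. by rewrite /xF tofrac_eq0 X_neq0. Qed.
Lemma yF_neq0 : yF != 0. Proof. by rewrite /yF tofrac_eq0 X_neq0. Qed.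
Lemma zF_neq0 : zF != 0. Proof. by rewrite /zF tofrac_eq0 X_neq0. Qed.
Lemma QF_neq0 n : (Q n)%:F != 0 :> RF3. Proof. by rewrite tofrac_eq0 Q_neq0. Qed.

Lemma cassF n : (Q n.+2)%:F * (Q n)%:F - (Q n.+1)%:F ^+ 2
   = xF ^+ 2 * zF ^+ 2 * (yF ^+ n * zF ^+ n) ^+ 2.
Proof.
have := congr1 (@FracField.tofrac _) (cassQ n).
by rewrite tofracB !tofracM !tofracXn ?tofracM ?tofracXn.
Qed.

Lemma M1 (M : nat -> nat -> RF3) : markov_family M -> forall n, M 1%N n = Fn n.
Proof.
case => h10 h01 h11 hrec n.
suff : M 1%N n = Fn n /\ M 1%N n.+1 = Fn n.+1 by case.
elim: n => [|n [IH1 IH2]].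
- split.
  + by rewrite h10 /Fn /Q Pn0 rmorph1 tofrac1 !expr0 mul1r mulr1 invr1 mulr1.
  + rewrite h11 /Fn /Q Pn1 rmorphD /= squ sqv tofracD !tofracXn.
    exact: base1_gen yF_neq0 zF_neq0.
- split => //.
  have e := hrec 1%N n 0%N 1%N.
  have h1 : in_index 1 n by rewrite /in_index coprime1n; case: n {IH1 IH2 e}.
  have h2 : in_index 0 1 by [].
  have h3 : `|(1 * 1)%N%:Z - (n * 0)%N%:Z| = 1 by rewrite muln0 muln1.
  have h4 : (1 + 2 * 0 <= n + 2 * 1)%N by lia.
  move: (e h1 h2 h3 h4).
  rewrite (_ : (1 + 2 * 0 = 1)%N) // (_ : (n + 2 * 1 = n.+2)%N) ?addn2 //.
  rewrite addn1 => ->.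
  rewrite IH1 IH2 h01 /Fn !(exprS yF) !(exprS zF).
  apply: (@step_gen _ xF yF zF (yF^+n) (zF^+n) (Q n)%:F (Q n.+1)%:F (Q n.+2)%:F).
  - exact: yF_neq0.
  - exact: zF_neq0.
  - exact: (expf_neq0 _ yF_neq0).
  - exact: (expf_neq0 _ zF_neq0).
  - exact: QF_neq0.
  - exact: cassF.
Qed.

Lemma part1 (M : nat -> nat -> RF3) n (P : Poly3) : markov_family M ->
  (1 <= n)%N -> markov_numerator M 1 n P -> uterm 1 P = u * Bsum n.
Proof.
move=> hM hn [_ hP].
case: n hn hP => [//|m] _ hP.
have e := @M1 M hM m.+1.
have E1 : (m.+1 - 1 = m)%N by lia.
have E2 : (1 + m.+1 - 1 = m.+1)%N by lia.
rewrite hP subnn E1 E2 expr0 mul1r !tofracM !tofracXn /Fn [X in _ = _ / (X * _)]exprS in e.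
have {e} e := @num1_gen _ _ _ _ _ _ yF_neq0 (expf_neq0 _ yF_neq0) (expf_neq0 _ zF_neq0) e.
have eP : P \mPo sq = Q m.+1 by apply/eqP; rewrite -tofrac_eq; apply/eqP.
have -> : P = Pn m.+1 by apply: sq_inj.
by rewrite uterm1E -/(Dn _) Dn_eq.
Qed.

Lemma part2 (M : nat -> nat -> RF3) n (P : Poly3) : markov_family M ->
  (2 <= n)%N -> markov_numerator M 2 (2 * n - 1) P ->
  uterm 1 P = u * (((2 * n)%N%:R : int) *: v ^+ (2 * n - 1)
        + \sum_(1 <= k < n) ((4 * k)%N%:R : int) *:
              (v ^+ (n + k - 1) * w ^+ (n - k))).
Proof.
move=> hM hn [_ hP].
case: n hn hP => [//|d] hd hP.
have hd1 : (1 <= d)%N by [].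
have fam : M 2%N (1 + 2 * d)%N = (M 1%N d ^+ 2 + M 1%N d.+1 ^+ 2) / M 0%N 1%N.
  case: hM => _ _ _ hrec.
  apply: (hrec 0 1 1 d)%N => //.
  - by rewrite /in_index coprime1n; case: (d) hd1.
  - lia.
have E0 : (2 * d.+1 - 1 = 1 + 2 * d)%N by lia.
have E1 : (1 + 2 * d - 1 = d + d)%N by lia.
have E2 : (2 + (1 + 2 * d) - 1 = (d + d).+2)%N by lia.
have [_ h01 _ _] := hM.
rewrite E0 E1 E2 fam !(@M1 M hM) h01 in hP.
have Eden : ('X_i0 ^+ (2 - 1) * 'X_i1 ^+ (d + d) * 'X_i2 ^+ (d + d).+2 : Poly3)
   = 'X_i0 * ('X_i1 ^+ d * 'X_i1 ^+ d) * ('X_i2 * ('X_i2 * ('X_i2 ^+ d * 'X_i2 ^+ d))).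
  by rewrite expr1 (exprS _ (d + d).+1) (exprS _ (d + d)) !exprD.
rewrite Eden !tofracM !tofracXn /Fn !(exprS yF) !(exprS zF) in hP.
have e := @part2_gen _ _ _ _ _ _ _ _ _ xF_neq0 yF_neq0 zF_neq0 (expf_neq0 _ yF_neq0) (expf_neq0 _ zF_neq0) hP.
have eR : ((v * w * Pn d ^+ 2 + Pn d.+1 ^+ 2) \mPo sq)%:F
    = yF ^+ 2 * zF ^+ 2 * (Q d)%:F ^+ 2 + (Q d.+1)%:F ^+ 2.
  by rewrite rmorphD !rmorphM ?rmorphXn /= sqv sqw -!/(Q _) tofracD !tofracM ?tofracXn !expr2.
have eP : P \mPo sq = (v * w * Pn d ^+ 2 + Pn d.+1 ^+ 2) \mPo sq.
  by apply/eqP; rewrite -tofrac_eq eR; apply/eqP.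
rewrite (@sq_inj _ _ eP) uterm1E.
rewrite !expr2 mderivD !mderivM dv dw !rmorphD !rmorphM /= -!/(Dn _) -!/(An _).
rewrite mul0r mulr0 addr0 rmorph0 mul0r add0r t0v t0w rmorphD !rmorphM /= -!/(Dn _) -!/(An _).
rewrite !An_eq !Dn_eq sum4 (Brec d) scaler_nat.
have -> : (2 * d.+1 - 1 = (d + d).+1)%N by lia.
congr (_ * _); rewrite (exprS _ (d + d)) exprD (exprS _ d).
move: (v ^+ d) (v) (w) (Bsum d) => a1 b1 c1 e1.
ring.
Qed.

Theorem theorem4p3 (M : nat -> nat -> RF3) :
  markov_family M ->
  (forall (n : nat) (P : Poly3), (1 <= n)%N ->
     markov_numerator M 1 n P ->
     uterm 1 P = 'X_i0 *
       \sum_(1 <= k < n.+1) (k%:R : int) *: ('X_i1 ^+ (k - 1) * 'X_i2 ^+ (n - k)))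
  /\
  (forall (n : nat) (P : Poly3), (2 <= n)%N ->
     markov_numerator M 2 (2 * n - 1) P ->
     uterm 1 P = 'X_i0 *
       (((2 * n)%N%:R : int) *: 'X_i1 ^+ (2 * n - 1)
        + \sum_(1 <= k < n) ((4 * k)%N%:R : int) *:
              ('X_i1 ^+ (n + k - 1) * 'X_i2 ^+ (n - k)))).
Proof.
move=> hM; split.
- by move=> n P hn hP; rewrite (@part1 M n P hM hn hP).
- by move=> n P hn hP; exact: (@part2 M n P hM hn hP).
Qed.
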